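(* Let $(X,Z)\in\mathbb{R}^n\times\mathbb{R}^{n\times p}$ be any fixed design, $\mathcal{R}\subseteq[n]$ any row set, $\alpha\in(0,1)$, and let $P_{\pi\mid\mathcal{R}}$ be uniformly distributed on $\mathcal{S}_{n\mid\mathcal{R}}$. Let $D_\mathcal{R}=\|(I-H_{P_{\pi\mid\mathcal{R}}X,Z,P_{\pi\mid\mathcal{R}}Z})X\|_2^2$ with $\alpha$-quantile $F^{-1}_{D_\mathcal{R}}(\alpha;X,Z)$, and let $\mu_\mathcal{R}(Z)=E\{\mathrm{rank}(Z-P_{\pi\mid\mathcal{R}}Z)\}$. Then: (i) if $pr(X\in\mathcal{C}(Z,P_{\pi\mid\mathcal{R}}Z))\ge\alpha$, then $F^{-1}_{D_\mathcal{R}}(\alpha;X,Z)=0$; (ii) $\mu_\mathcal{R}(Z)\ge\mu_{\mathcal{R}\cup\{k\}}(Z)$ for any $k\in[n]\setminus\mathcal{R}$.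
   Context: $[n]=\{1,\dots,n\}$. $\mathcal{C}(M)$ is the column space of $M$ and $H_M$ the orthogonal projection onto it; $H_{A,B,C}$ is the projection onto the column space of $(A,B,C)$. For $\mathcal{R}\subseteq[n]$, $\mathcal{S}_{n\mid\mathcal{R}}$ is the group of $n\times n$ permutation matrices that fix every row index in $\mathcal{R}$ (diagonal entry $1$ at each $i\in\mathcal{R}$). The $\alpha$-quantile of a random variable $D$ is $F_D^{-1}(\alpha)=\inf\{x:pr(D\le x)\ge\alpha\}$. *)

(* Defs.v *)
From HB Require Import structures.
From mathcomp Require Import all_boot all_order all_fingroup all_algebra.
From mathcomp Require Import boolp classical_sets reals.
Set Implicit Arguments. Unset Strict Implicit. Unset Printing Implicit Defensive.
Import Order.TTheory GRing.Theory Num.Theory.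
Local Open Scope ring_scope.

Section Defs.
Context {R : realType}.

(* Orthogonal projection onto the column space C(M):
   H_M = C (C^T C)^{-1} C^T, where C = col_base M has full column rank and
   the same column space as M. *)
Definition hatmx (n q : nat) (M : 'M[R]_(n, q)) : 'M[R]_n :=
  let C := col_base M in C *m invmx (C^T *m C) *m C^T.

Definition sqnorm (n : nat) (v : 'cV[R]_n) : R := \sum_i (v i 0) ^+ 2.

(* S_{n|Rs}: permutations whose permutation matrix has diagonal entry 1 at
   every row index in Rs, i.e. s i = i for i in Rs. *)
Definition Sfix (n : nat) (Rs : {set 'I_n}) : {set 'S_n} :=
  [set s : 'S_n | [forall i in Rs, s i == i]].

Definition prU (n : nat) (Rs : {set 'I_n}) (E : pred 'S_n) : R :=
  #|[set s in Sfix Rs | E s]|%:R / #|Sfix Rs|%:R.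

Definition EU (n : nat) (Rs : {set 'I_n}) (f : 'S_n -> R) : R :=
  (\sum_(s in Sfix Rs) f s) / #|Sfix Rs|%:R.

Definition Dstat (n p : nat) (X : 'cV[R]_n) (Z : 'M[R]_(n, p)) (s : 'S_n) : R :=
  let P := perm_mx s in
  sqnorm ((1%:M - hatmx (row_mx (row_mx (P *m X) Z) (P *m Z))) *m X).

Definition quantileU (n : nat) (Rs : {set 'I_n}) (D : 'S_n -> R) (alpha : R) : R :=
  inf [set x : R | alpha <= prU Rs (fun s => D s <= x)]%classic.

Definition muR (n p : nat) (Rs : {set 'I_n}) (Z : 'M[R]_(n, p)) : R :=
  EU Rs (fun s => (\rank (Z - perm_mx s *m Z))%:R).

Definition in_colspace (n q : nat) (X : 'cV[R]_n) (M : 'M[R]_(n, q)) : bool :=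
  (X^T <= M^T)%MS.

End Defs.

(* Main.v *)
Require Import Defs.
From HB Require Import structures.
From mathcomp Require Import all_boot all_order all_fingroup all_algebra.
From mathcomp Require Import boolp classical_sets reals.
Import Order.TTheory GRing.Theory Num.Theory.
Local Open Scope ring_scope.
Set Implicit Arguments. Unset Strict Implicit. Unset Printing Implicit Defensive.

Section S.
Variable R : realType.

Lemma sqnorm_ge0 n (v : 'cV[R]_n) : 0 <= sqnorm v.
Proof. by apply: sumr_ge0 => i _; apply: sqr_ge0. Qed.

Lemma trmx_mul_self n (v : 'cV[R]_n) : (v^T *m v) 0 0 = sqnorm v.
Proof. by rewrite mxE /sqnorm; apply: eq_bigr => i _; rewrite mxE expr2. Qed.

Lemma sqnorm_eq0 n (v : 'cV[R]_n) : sqnorm v = 0 -> v = 0.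
Proof.
move=> /eqP; rewrite /sqnorm psumr_eq0 => [/allP H|i _]; last exact: sqr_ge0.
apply/matrixP => i j; rewrite ord1 mxE.
by have /implyP/(_ isT) := H i (mem_index_enum i); rewrite sqrf_eq0 => /eqP.
Qed.

Lemma gram_unit n r (C : 'M[R]_(n, r)) : row_full C -> C^T *m C \in unitmx.
Proof.
move=> fC; rewrite -row_free_unit -kermx_eq0; apply/eqP.
have fCt : row_free C^T by rewrite /row_free mxrank_tr.
apply/row_matrixP => i; rewrite row0.
set u := row i (kermx (C^T *m C)).
have hu : u *m (C^T *m C) = 0 by rewrite /u -row_mul mulmx_ker row0.
have : (C *m u^T)^T *m (C *m u^T) = 0.
  by rewrite trmx_mul trmxK mulmxA -(mulmxA u) hu mul0mx.
move=> h0.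
have : sqnorm (C *m u^T) = 0 by rewrite -trmx_mul_self h0 mxE.
move/sqnorm_eq0 => /(congr1 trmx); rewrite trmx_mul trmxK trmx0 => h1.
by apply: (row_free_inj fCt); rewrite h1 mul0mx.
Qed.

Lemma hatmx_fix n q (M : 'M[R]_(n, q)) (X : 'cV[R]_n) :
  (X^T <= M^T)%MS -> hatmx M *m X = X.
Proof.
move=> /submxP [w hw].
have -> : X = col_base M *m (row_base M *m w^T).
  by rewrite mulmxA mulmx_base -[X]trmxK hw trmx_mul trmxK.
rewrite /hatmx; have := col_base_full M.
move: (col_base M) (row_base M *m w^T) => C v fC.
by rewrite -!mulmxA (mulmxA C^T) mulKmx // gram_unit.
Qed.

Lemma rowd n p (Z : 'M[R]_(n, p)) (s : 'S_n) i :
  row i (Z - perm_mx s *m Z) = row i Z - row (s i) Z.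
Proof. by rewrite -row_permE; apply/rowP => c; rewrite !mxE. Qed.

Lemma rank_step n p (Z : 'M[R]_(n, p)) (s : 'S_n) j k : s k = k ->
  (\rank (Z - perm_mx s *m Z)%R <= \rank (Z - perm_mx (tperm j k * s)%g *m Z)%R)%N.
Proof.
move=> sk.
have [<-|njk] := eqVneq j k; first by rewrite tperm1 mul1g.
apply: mxrankS; apply/row_subP => i.
have [->|nik] := eqVneq i k; first by rewrite rowd sk subrr sub0mx.
have [->|nij] := eqVneq i j.
  rewrite rowd; have -> : row j Z - row (s j) Z =
     row j (Z - perm_mx (tperm j k * s)%g *m Z) + row k (Z - perm_mx (tperm j k * s)%g *m Z).
    by rewrite !rowd !permM tpermL tpermR sk addrA subrK.
  by rewrite addmx_sub ?row_sub.
have e : tperm j k i = i by rewrite tpermD // eq_sym.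
by rewrite rowd -{2}e -permM -rowd row_sub.
Qed.

Lemma invP n (s : 'S_n) j k : ((s^-1)%g k == j) = (s j == k).
Proof. by apply/eqP/eqP => [<-|<-]; rewrite ?permKV ?permK. Qed.

Lemma sum_decomp n (Rs : {set 'I_n}) k (f : 'S_n -> R) : k \notin Rs ->
  \sum_(s in Sfix Rs) f s =
  \sum_(j | j \notin Rs) \sum_(s in Sfix (k |: Rs)) f (tperm j k * s)%g.
Proof.
move=> kR.
rewrite (partition_big (fun s : 'S_n => (s^-1)%g k) (fun j => j \notin Rs)); last first.
  move=> s; rewrite inE => /forallP H; apply/negP => jR.
  have := H ((s^-1)%g k); rewrite jR /= permKV => /eqP e.
  by move: kR; rewrite e jR.
apply: eq_bigr => j jR.
rewrite (reindex_inj (mulgI (tperm j k))); apply: eq_bigl => s.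
rewrite invP !inE permM tpermL.
apply/andP/forallP => [[/forallP H /eqP sk] i|H].
  apply/implyP; rewrite !inE => /orP[/eqP->//|iR]; first exact/eqP.
  have := H i; rewrite iR permM tpermD //=.
    by apply: contraNneq jR => ->.
  by apply: contraNneq kR => ->.
split; last by have := H k; rewrite !inE eqxx.
apply/forallP => i; apply/implyP => iR.
have := H i; rewrite !inE iR orbT /= permM tpermD //.
  by apply: contraNneq jR => ->.
by apply: contraNneq kR => ->.
Qed.

Lemma part2 n p (Z : 'M[R]_(n, p)) (Rs : {set 'I_n}) k :
  k \notin Rs -> muR (k |: Rs) Z <= muR Rs Z.
Proof.
move=> kR; rewrite /muR /EU.
set r := fun s : 'S_n => (\rank (Z - perm_mx s *m Z))%:R : R.
have c (A : {set 'S_n}) : #|A|%:R = \sum_(s in A) (1:R) by rewrite sumr_const.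
have cv (g : 'I_n -> R) : \sum_(j | j \notin Rs) g j = \sum_(j in ~: Rs) g j.
  by apply: eq_bigl => j; rewrite inE.
set a := \sum_(s in Sfix (k |: Rs)) r s.
set h : R := #|Sfix (k |: Rs)|%:R.
set m := #|~: Rs|.
have hG : #|Sfix Rs|%:R = h * m%:R :> R.
  rewrite c (sum_decomp (fun _ => 1) kR) cv.
  by rewrite (eq_bigr (fun _ => h)) ?sumr_const ?mulr_natr // => j _; rewrite /h c.
have hb : a * m%:R <= \sum_(s in Sfix Rs) r s.
  rewrite (sum_decomp r kR) cv.
  have -> : a * m%:R = \sum_(j in ~: Rs) a by rewrite sumr_const mulr_natr.
  apply: ler_sum => j _; apply: ler_sum => s; rewrite inE => /forallP H.
  rewrite /r ler_nat rank_step //.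
  by have := H k; rewrite !inE eqxx => /eqP.
have m0 : 0 < m%:R :> R.
  by rewrite ltr0n /m; apply/card_gt0P; exists k; rewrite inE.
have h0 : 0 < h.
  rewrite /h ltr0n; apply/card_gt0P; exists 1%g; rewrite inE.
  by apply/forallP => i; rewrite perm1 eqxx implybT.
rewrite hG.
have -> : a / h = (a * m%:R) / (h * m%:R).
  by rewrite invfM mulrACA mulfV ?mulr1 // gt_eqF.
apply: ler_wpM2r; first by rewrite invr_ge0 ltW // mulr_gt0.
exact: hb.
Qed.

Lemma Dstat0 n p (X : 'cV[R]_n) (Z : 'M[R]_(n, p)) s :
  in_colspace X (row_mx Z (perm_mx s *m Z)) -> Dstat X Z s = 0.
Proof.
rewrite /in_colspace /Dstat => H.
rewrite mulmxBl mul1mx hatmx_fix ?subrr.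
  by rewrite /sqnorm big1 // => i _; rewrite mxE expr0n.
apply: (submx_trans H).
rewrite !tr_row_mx -!addsmxE.
apply: addsmxS => //; rewrite -addsmxE; exact: addsmxSr.
Qed.

Lemma prU_le n (Rs : {set 'I_n}) (E E' : pred 'S_n) :
  (forall s, s \in Sfix Rs -> E s -> E' s) -> @prU R n Rs E <= @prU R n Rs E'.
Proof.
move=> H; rewrite /prU ler_wpM2r ?invr_ge0 ?ler0n // ler_nat.
apply/subset_leq_card/fintype.subsetP => s.
rewrite inE => /andP[sG Es]; by rewrite inE sG (H s sG Es).
Qed.

Lemma part1 n p (X : 'cV[R]_n) (Z : 'M[R]_(n, p)) (Rs : {set 'I_n}) alpha :
  0 < alpha ->
  alpha <= prU Rs (fun s => in_colspace X (row_mx Z (perm_mx s *m Z))) ->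
  quantileU Rs (Dstat X Z) alpha = 0.
Proof.
move=> a0 ha; rewrite /quantileU.
set S := [set x : R | _]%classic.
have S0 : S 0.
  rewrite /S /=; apply: (le_trans ha); apply: prU_le => s _ /Dstat0 ->.
  exact: lexx.
have lb : lbound S 0.
  move=> x; rewrite /S /= => hx; rewrite leNgt; apply/negP => x0.
  suff : prU Rs (fun s => Dstat X Z s <= x) = 0 :> R.
    by move=> e; move: hx; rewrite e leNgt a0.
  rewrite /prU; apply/eqP; rewrite mulf_eq0 pnatr_eq0 cards_eq0; apply/orP; left.
  apply/eqP/setP => s; rewrite !inE; apply/negbTE/negP => /andP[_ Ds].
  by have := lt_le_trans (le_lt_trans (sqnorm_ge0 _) (le_lt_trans Ds x0)) (lexx 0); rewrite ltxx.
apply/le_anti/andP; split.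
  by apply: (ge_inf (ex_intro _ 0 lb)).
by apply: lb_le_inf => //; exists 0.
Qed.
End S.

Theorem proposition2 (R : realType) (n p : nat) (X : 'cV[R]_n) (Z : 'M[R]_(n, p))
    (Rs : {set 'I_n}) (alpha : R) :
  0 < alpha < 1 ->
  (alpha <= prU Rs (fun s => in_colspace X (row_mx Z (perm_mx s *m Z))) ->
     quantileU Rs (Dstat X Z) alpha = 0) /\
  (forall k : 'I_n, k \notin Rs -> muR (k |: Rs) Z <= muR Rs Z).
Proof.
move=> /andP[a0 _]; split; first exact: part1.
by move=> k; apply: part2.
Qed.
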